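(* Let $(C,\mathfrak p,\mathfrak d)$ be a regular $q$-cycle coalgebra with $\mathfrak p_{11}^1\ne0$. Then $\mathfrak d_{b1}^c=\mathfrak p_{b1}^c$ for all $b,c\in\{0,\dots,n-1\}$.
   Context: $K$ is an algebraically closed field of characteristic $0$ and $n\ge2$. $C$ is the coalgebra dual to $K[y]/\langle y^n\rangle$: basis $x_0,\dots,x_{n-1}$, $\Delta(x_i)=\sum_{j+k=i}x_j\otimes x_k$, $\epsilon(x_i)=\delta_{i0}$; $C\otimes C$ has the tensor product coalgebra structure; Sweedler notation $\Delta(b)=b_{(1)}\otimes b_{(2)}$. For linear maps $\mathfrak p,\mathfrak d\colon C\otimes C\to C$ write $a\cdot b=\mathfrak p(a\otimes b)$, $a:b=\mathfrak d(a\otimes b)$, $\mathfrak p(x_i\otimes x_j)=\sum_{k=0}^{n-1}\mathfrak p_{ij}^kx_k$, $\mathfrak d(x_i\otimes x_j)=\sum_{k=0}^{n-1}\mathfrak d_{ij}^kx_k$. A triple $(C,\mathfrak p,\mathfrak d)$ with $\mathfrak p,\mathfrak d$ coalgebra morphisms is a regular $q$-magma coalgebra if there are coalgebra morphisms $a\otimes b\mapsto a^b$, $a\otimes b\mapsto a_b$ from $C\otimes C$ to $C$ with $a^{b_{(1)}}\cdot b_{(2)}=(a\cdot b_{(1)})^{b_{(2)}}=\epsilon(b)a$ and $(a:b_{(2)})_{b_{(1)}}=a_{b_{(2)}}:b_{(1)}=\epsilon(b)a$. It is a regular $q$-cycle coalgebra if moreover for all $a,b,c$: (1) $(a\cdot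 b_{(1)})\cdot(c:b_{(2)})=(a\cdot c_{(2)})\cdot(b\cdot c_{(1)})$; (2) $(a\cdot b_{(1)}):(c\cdot b_{(2)})=(a:c_{(2)})\cdot(b:c_{(1)})$; (3) $(a:b_{(1)}):(c:b_{(2)})=(a:c_{(2)}):(b\cdot c_{(1)})$. *)

(* Defs.v *)
From HB Require Import structures.
From mathcomp Require Import all_boot all_order all_algebra.
Set Implicit Arguments. Unset Strict Implicit. Unset Printing Implicit Defensive.
Import GRing.Theory.
Local Open Scope ring_scope.

(* Elements of C (basis x_0..x_{n-1}) are row vectors 'rV[K]_n;
   v 0 k is the coefficient of x_k.  Elements of C (x) C are n x n matrices,
   entry (u,w) being the coefficient of x_u (x) x_w.
   A linear map C (x) C -> C is given by its values M i j = M(x_i (x) x_j),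
   so the structure constant m_{ij}^k is  M i j 0 k. *)

Section QCycle.
Variables (K : fieldType) (n : nat).

Definition bvec (i : 'I_n) : 'rV[K]_n := delta_mx 0 i.

Definition ceps (v : 'rV[K]_n) : K := \sum_(k < n | val k == 0%N) v 0 k.

Definition cdelta (v : 'rV[K]_n) : 'M[K]_n :=
  \matrix_(u, w) \sum_(k < n | (val u + val w == val k)%N) v 0 k.

Definition tens (u v : 'rV[K]_n) : 'M[K]_n := \matrix_(k, l) (u 0 k * v 0 l).

Definition bil (M : 'I_n -> 'I_n -> 'rV[K]_n) (a b : 'rV[K]_n) : 'rV[K]_n :=
  \sum_(i < n) \sum_(j < n) (a 0 i * b 0 j) *: M i j.

(* M : C (x) C -> C is a coalgebra morphism (C (x) C with the tensor product
   coalgebra structure); checked on the basis x_i (x) x_j. *)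
Definition coalg_morph (M : 'I_n -> 'I_n -> 'rV[K]_n) : Prop :=
  (forall i j, ceps (M i j) = ceps (bvec i) * ceps (bvec j)) /\
  (forall i j : 'I_n,
     cdelta (M i j) =
     \sum_(a < n) \sum_(b < n | (val a + val b == val i)%N)
       \sum_(c < n) \sum_(d < n | (val c + val d == val j)%N)
          tens (M a c) (M b d)).

(* Sweedler sum: sw b F = F(b_(1), b_(2)) for F bilinear. *)
Definition sw (b : 'rV[K]_n) (F : 'rV[K]_n -> 'rV[K]_n -> 'rV[K]_n) : 'rV[K]_n :=
  \sum_(i < n) \sum_(j < n) \sum_(k < n | (val j + val k == val i)%N)
     b 0 i *: F (bvec j) (bvec k).

Definition regular_qmagma (P D : 'I_n -> 'I_n -> 'rV[K]_n) : Prop :=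
  coalg_morph P /\ coalg_morph D /\
  exists L R : 'I_n -> 'I_n -> 'rV[K]_n,   (* a^b = bil L a b, a_b = bil R a b *)
    coalg_morph L /\ coalg_morph R /\
    (forall a b, sw b (fun b1 b2 => bil P (bil L a b1) b2) = ceps b *: a) /\
    (forall a b, sw b (fun b1 b2 => bil L (bil P a b1) b2) = ceps b *: a) /\
    (forall a b, sw b (fun b1 b2 => bil R (bil D a b2) b1) = ceps b *: a) /\
    (forall a b, sw b (fun b1 b2 => bil D (bil R a b2) b1) = ceps b *: a).

Definition regular_qcycle (P D : 'I_n -> 'I_n -> 'rV[K]_n) : Prop :=
  regular_qmagma P D /\
  (forall a b c,
     sw b (fun b1 b2 => bil P (bil P a b1) (bil D c b2)) =
     sw c (fun c1 c2 => bil P (bil P a c2) (bil P b c1))) /\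
  (forall a b c,
     sw b (fun b1 b2 => bil D (bil P a b1) (bil P c b2)) =
     sw c (fun c1 c2 => bil P (bil D a c2) (bil D b c1))) /\
  (forall a b c,
     sw b (fun b1 b2 => bil D (bil D a b1) (bil D c b2)) =
     sw c (fun c1 c2 => bil D (bil D a c2) (bil P b c1))).

End QCycle.

(* Main.v *)
Require Import Defs.
From HB Require Import structures.
From mathcomp Require Import all_boot all_order all_algebra.
From mathcomp Require Import zify ring.
Import GRing.Theory.
Local Open Scope ring_scope.

Module Aux.
Set Implicit Arguments. Unset Strict Implicit.
Section Gen.
Variables (K : fieldType) (n : nat).
Implicit Types (M : 'I_n -> 'I_n -> 'rV[K]_n).

Definition cf M (a c u : nat) : K :=
  match (insub a : option 'I_n), (insub c : option 'I_n), (insub u : option 'I_n) with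
  | Some a', Some c', Some u' => M a' c' 0 u'
  | _, _, _ => 0 end.

Lemma cfE M (a c u : 'I_n) : cf M a c u = M a c 0 u.
Proof. by rewrite /cf !valK. Qed.

Lemma cf_out M a c u : ((n <= a) || (n <= c) || (n <= u))%N -> cf M a c u = 0.
Proof.
move=> h; rewrite /cf; case: insubP => // a' ha ea; case: insubP => // c' hc ec;
 case: insubP => // u' hu eu; exfalso; move: h; rewrite -ea -ec -eu; lia.
Qed.

Lemma cf_ord M (a c u : nat) (ha : (a < n)%N) (hc : (c < n)%N) (hu : (u < n)%N) :
  cf M a c u = M (Ordinal ha) (Ordinal hc) 0 (Ordinal hu).
Proof. exact: (cfE M (Ordinal ha) (Ordinal hc) (Ordinal hu)). Qed.

Lemma sum_conv (G : nat -> nat -> K) j : (j < n)%N ->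
  \sum_(c < n) \sum_(d < n | (val c + val d == j)%N) G c d = \sum_(c < j.+1) G c (j - c)%N.
Proof.
move=> hj.
have inner : forall c : 'I_n, \sum_(d < n | (val c + val d == j)%N) G c d
   = if (c <= j)%N then G c (j - c)%N else 0.
  move=> c; case: leqP => h.
    have hd : (j - c < n)%N by lia.
    rewrite (big_pred1 (Ordinal hd)) // => d /=.
    rewrite -val_eqE /=; apply/eqP/eqP; lia.
  rewrite big_pred0 // => d /=; apply/negbTE; lia.
rewrite (eq_bigr _ (fun c _ => inner c)) -big_mkcond /=.
rewrite (big_ord_widen n (fun c => G c (j - c)%N)) //.
Qed.

Lemma crec M : coalg_morph M -> forall i j u w, (i < n)%N -> (j < n)%N -> (u < n)%N -> (w < n)%N ->
  cf M i j (u + w) = \sum_(a < i.+1) \sum_(c < j.+1) cf M a c u * cf M (i - a)%N (j - c)%N w.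
Proof.
move=> [_ H2] i j u w hi hj hu hw.
have := congr1 (fun A : 'M[K]_n => A (Ordinal hu) (Ordinal hw)) (H2 (Ordinal hi) (Ordinal hj)).
rewrite /cdelta mxE /=.
have -> : \sum_(k < n | (u + w == k)%N) M (Ordinal hi) (Ordinal hj) 0 k = cf M i j (u + w).
  case: (ltnP (u + w) n) => h.
    rewrite (big_pred1 (Ordinal h)); first by rewrite cf_ord.
    by move=> k /=; rewrite -val_eqE /= eq_sym.
  rewrite big_pred0; first by rewrite cf_out //; lia.
  move=> k; apply/negbTE; have := ltn_ord k; lia.
move=> ->.
transitivity (\sum_(a<n) \sum_(b<n | (val a + val b == i)%N) \sum_(c<n) \sum_(d<n | (val c + val d==j)%N)
     cf M a c u * cf M b d w).
  rewrite summxE; apply: eq_bigr => a _; rewrite summxE; apply: eq_bigr => b _.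
  rewrite summxE; apply: eq_bigr => c _; rewrite summxE; apply: eq_bigr => d _.
  by rewrite mxE -!cfE.
rewrite -(sum_conv (fun a b => \sum_(c < j.+1) cf M a c u * cf M b (j - c)%N w) hi).
apply: eq_bigr => a _; apply: eq_bigr => b _.
exact: (sum_conv (fun c d => cf M a c u * cf M b d w) hj).
Qed.


Lemma bvecE (i k : 'I_n) : bvec K i 0 k = (val k == val i)%:R.
Proof. by rewrite /bvec mxE eqxx /= val_eqE. Qed.

Lemma ceps_val (v : 'rV[K]_n) (h : (0 < n)%N) : ceps v = v 0 (Ordinal h).
Proof.
by rewrite /ceps (big_pred1 (Ordinal h)) // => k /=.
Qed.

Lemma sum_one (T : nat -> K) N i0 : (i0 < N)%N ->
  (forall i, (i < N)%N -> i != i0 -> T i = 0) -> \sum_(i < N) T i = T i0.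
Proof.
move=> h H; rewrite (bigD1 (Ordinal h)) //= big1 ?addr0 // => i hi.
by apply: H => //; rewrite -val_eqE in hi.
Qed.

Lemma sum2_one (T : nat -> nat -> K) A C a0 c0 : (a0 < A)%N -> (c0 < C)%N ->
  (forall a c, (a < A)%N -> (c < C)%N -> ~~ ((a == a0) && (c == c0)) -> T a c = 0) ->
  \sum_(a < A) \sum_(c < C) T a c = T a0 c0.
Proof.
move=> ha hc H; rewrite (sum_one (T := fun a => \sum_(c < C) T a c) ha).
  apply: sum_one => // c hcC hne; apply: H => //; by rewrite eqxx.
move=> a haA hne; rewrite big1 // => c _; apply: H => //; by rewrite (negbTE hne).
Qed.

Lemma sum2_two (T : nat -> nat -> K) A C a0 c0 a1 c1 : (a0 < A)%N -> (c0 < C)%N ->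
  (a1 < A)%N -> (c1 < C)%N -> a0 != a1 ->
  (forall a c, (a < A)%N -> (c < C)%N -> ~~ ((a == a0) && (c == c0)) ->
      ~~ ((a == a1) && (c == c1)) -> T a c = 0) ->
  \sum_(a < A) \sum_(c < C) T a c = T a0 c0 + T a1 c1.
Proof.
move=> ha0 hc0 ha1 hc1 hne H.
rewrite (bigD1 (Ordinal ha0)) //= (bigD1 (Ordinal ha1)) /=; last by rewrite -val_eqE /= eq_sym.
rewrite (sum_one (T := fun c => T a0 c) hc0); last first.
  move=> c hc hc'; apply: H => //; first by rewrite eqxx.
  by rewrite (negbTE hne).
rewrite (sum_one (T := fun c => T a1 c) hc1); last first.
  move=> c hc hc'; apply: H => //; last by rewrite eqxx.
  by rewrite eq_sym (negbTE hne).
rewrite big1 ?addr0 // => a /andP[h1 h2]; apply: big1 => c _.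
rewrite -val_eqE /= in h1; rewrite -val_eqE /= in h2.
apply: H => //; apply/negP => /andP[/eqP e _]; move: h1 h2; rewrite e; lia.
Qed.

Hypothesis hn : (2 <= n)%N.
Hypothesis hK : [pchar K] =i pred0.

Section Morph.
Variable M : 'I_n -> 'I_n -> 'rV[K]_n.
Hypothesis hM : coalg_morph M.

Lemma cf_eps i j : (i < n)%N -> (j < n)%N -> cf M i j 0 = ((i == 0%N) && (j == 0%N))%:R.
Proof.
move=> hi hj; have h0 : (0 < n)%N by lia.
have := hM.1 (Ordinal hi) (Ordinal hj).
rewrite !(ceps_val _ h0) !bvecE /= => e; rewrite (cf_ord M hi hj h0) e.
by rewrite -natrM mulnb (eq_sym 0%N i) (eq_sym 0%N j).
Qed.

Lemma L00 : cf M 0 0 1 = 0.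
Proof.
set z := cf M 0 0 1.
have st : forall k, (k < n)%N -> cf M 0 0 k.+1 = cf M 0 0 k * z.
  move=> k hk; rewrite -addn1 crec //; try lia.
  by rewrite !big_ord1.
have pw : forall k, (k <= n)%N -> cf M 0 0 k = z ^+ k.
  elim=> [|k IH] hk; first by rewrite cf_eps //; lia.
  by rewrite st ?IH ?exprSr //; lia.
have := pw n (leqnn n); rewrite cf_out ?leqnn ?orbT // => /esym/eqP.
by rewrite expf_eq0 => /andP[_ /eqP].
Qed.

Lemma Ltri u a c : (a + c < u)%N -> cf M a c u = 0.
Proof.
elim: u a c => [//|u IH] a c h.
case: (boolP ((a < n) && (c < n) && (u.+1 < n))%N) => [/andP[/andP[ha hc] hu]|hh];
  last by rewrite cf_out //; move: hh; lia.
rewrite -addn1 crec //; try lia.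
apply: big1 => a' _; apply: big1 => c' _.
have := ltn_ord a'; have := ltn_ord c' => h1 h2.
case: (ltnP (a' + c') u) => h'; first by rewrite IH // mul0r.
have -> : (a - a')%N = 0%N by lia.
have -> : (c - c')%N = 0%N by lia.
by rewrite L00 mulr0.
Qed.

Lemma Ltri2 : (forall m, cf M 0 m 1 = 0) -> forall u a c, (a < u)%N -> cf M a c u = 0.
Proof.
move=> hb; elim=> [//|u IH] a c h.
case: (boolP ((a < n) && (c < n) && (u.+1 < n))%N) => [/andP[/andP[ha hc] hu]|hh];
  last by rewrite cf_out //; move: hh; lia.
rewrite -addn1 crec //; try lia.
apply: big1 => a' _; apply: big1 => c' _.
have := ltn_ord a'; have := ltn_ord c' => h1 h2.
case: (eqVneq (nat_of_ord a') a) => e.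
  by rewrite e subnn hb mulr0.
by rewrite IH ?mul0r //; lia.
Qed.


Lemma natr_neq0 k : k != 0%N -> (k%:R : K) != 0.
Proof. by move=> h; rewrite (proj1 (pcharf0P K) hK). Qed.

Lemma Lbeta : cf M 1 0 1 != 0 -> forall m, cf M 0 m 1 = 0.
Proof.
move=> hmu m; elim/ltn_ind: m => m IHm.
case: (eqVneq (cf M 0 m 1) 0) => // hb; exfalso.
have hm : (0 < m)%N by case: m IHm hb => //; rewrite L00 eqxx.
have hmn : (m < n)%N.
  by case: (ltnP m n) => // h; move: hb; rewrite cf_out ?eqxx //; lia.
set mu := cf M 1 0 1; set b := cf M 0 m 1.
pose Z u := [/\ (forall a c, (a < u)%N -> (c < m)%N -> cf M a c u = 0),
   (forall a c, (a + 2 <= u)%N -> (c <= m)%N -> cf M a c u = 0),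
   cf M u 0 u = mu ^+ u & cf M u.-1 m u = u%:R * mu ^+ u.-1 * b].
pose S u a c := \sum_(a' < a.+1) \sum_(c' < c.+1) cf M a' c' u * cf M (a - a')%N (c - c')%N 1.
have step : forall u, (0 < u)%N -> Z u ->
  [/\ (forall a c, (a < u.+1)%N -> (c < m)%N -> S u a c = 0),
   (forall a c, (a + 2 <= u.+1)%N -> (c <= m)%N -> S u a c = 0),
   S u u.+1 0 = mu ^+ u.+1 & S u u m = u.+1%:R * mu ^+ u * b].
  move=> u hu [Z1 Z2 Z3 Z4]; split.
  - move=> a c ha hc; apply: big1 => a' _; apply: big1 => c' _.
    have := ltn_ord a'; have := ltn_ord c' => h1 h2.
    case: (eqVneq (nat_of_ord a') a) => e.
      by rewrite e subnn IHm ?mulr0 //; lia.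
    by rewrite Z1 ?mul0r //; lia.
  - move=> a c ha hc; apply: big1 => a' _; apply: big1 => c' _.
    have := ltn_ord a'; have := ltn_ord c' => h1 h2.
    case: (eqVneq (nat_of_ord a') a) => e.
      case: (eqVneq (nat_of_ord c') 0%N) => e2.
        by rewrite e e2 Z1 ?mul0r //; lia.
      by rewrite e subnn IHm ?mulr0 //; lia.
    by rewrite Z2 ?mul0r //; lia.
  - rewrite /S (sum2_one (T := fun a' c' => cf M a' c' u * cf M (u.+1 - a')%N (0 - c')%N 1)
       (a0 := u) (c0 := 0)) //.
      by rewrite Z3 subSnn exprSr.
    move=> a c ha hc hne; have -> : c = 0%N by lia.
    case: (ltnP a u) => h; first by rewrite Z1 ?mul0r //; lia.
    have -> : a = u.+1 by lia.
    by rewrite subnn L00 mulr0.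
  - rewrite /S (sum2_two (T := fun a' c' => cf M a' c' u * cf M (u - a')%N (m - c')%N 1)
       (a0 := u) (c0 := 0) (a1 := u.-1) (c1 := m)) //; try lia.
      rewrite subnn subn0 Z4 Z3 -/b.
      have -> : (u - u.-1)%N = 1%N by lia.
      rewrite subnn -/mu.
      case: u hu {Z1 Z2 Z3 Z4} => // u _ /=.
      rewrite exprSr -[u.+2]addn1 -[u.+1]addn1 !natrD; ring.
    move=> a c ha hc hne1 hne2.
    case: (eqVneq a u) => e.
      rewrite e subnn IHm ?mulr0 //; move: hne1; rewrite e eqxx /=; lia.
    case: (eqVneq a u.-1) => e'.
      rewrite Z1 ?mul0r //; first lia.
      move: hne2; rewrite e' eqxx /=; lia.
    by rewrite Z2 ?mul0r //; lia.
have lift : forall u, (0 < u)%N -> (u.+1 < n)%N -> Z u -> Z u.+1.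
  move=> u hu hun hZ; have [s1 s2 s3 s4] := step u hu hZ.
  have E : forall a c, (a < n)%N -> (c < n)%N -> cf M a c u.+1 = S u a c.
    by move=> a c ha hc; rewrite -addn1 crec //; lia.
  split.
  - move=> a c ha hc; case: (ltnP a n) => h; last by rewrite cf_out // h.
    by rewrite E ?s1 //; lia.
  - move=> a c ha hc; case: (ltnP a n) => h; last by rewrite cf_out // h.
    by rewrite E ?s2 //; lia.
  - by rewrite E ?s3 //; lia.
  - by rewrite /= E ?s4 //; lia.
have allZ : forall u, (0 < u)%N -> (u < n)%N -> Z u.
  elim=> [//|u IH] _ hun.
  case: (posnP u) => [->|hu].
    split.
    - move=> a c ha hc; have -> : a = 0%N by lia. exact: IHm.
    - move=> a c; lia.
    - by rewrite expr1.
    - by rewrite /= expr0 !mul1r.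
  by apply: lift => //; apply: IH => //; lia.
have hZ := allZ n.-1 ltac:(lia) ltac:(lia).
have [_ _ _ s4] := step n.-1 ltac:(lia) hZ.
have := crec hM (i := n.-1) (j := m) (u := n.-1) (w := 1) ltac:(lia) hmn ltac:(lia) ltac:(lia).
rewrite cf_out; last by lia.
rewrite -/(S n.-1 n.-1 m) s4 => /esym/eqP.
rewrite !mulf_eq0 expf_eq0 (negbTE hb) (negbTE hmu) andbF !orbF.
by rewrite (negbTE (natr_neq0 _)) //; lia.
Qed.


Section Beta0.
Hypothesis hb0 : forall m, cf M 0 m 1 = 0.

Lemma F1 j k : (j < n)%N -> (k < n)%N -> cf M 0 j k = ((j == 0%N) && (k == 0%N))%:R.
Proof.
move=> hj hk; have h0 : (0 < n)%N by lia.
case: (posnP k) => [->|h]; first by rewrite cf_eps // eqxx andbC.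
rewrite Ltri2 //; case: k h hk => [//|k] _ _; by rewrite andbF.
Qed.

Lemma F2 c k : (c < n)%N -> k != 1%N -> cf M 1 c k = 0.
Proof.
move=> hc hk; case: (ltnP k n) => h; last by rewrite cf_out // h !orbT.
case: (posnP k) => [->|h']; first by rewrite cf_eps.
by rewrite Ltri2 //; lia.
Qed.

Lemma Lsub m : (2 <= m)%N -> forall c, (c < n)%N ->
  (forall c', (c' < c)%N -> cf M c' 0 1 = (c' == 1%N)%:R) -> cf M c 0 m = (c == m)%:R.
Proof.
elim: m => [//|m IH] hm c hc hyp.
case: (ltnP m.+1 n) => hmn; last first.
  by rewrite cf_out ?hmn ?orbT // (_ : (c == m.+1) = false) //; lia.
rewrite -addn1 crec //; try lia.
case: (posnP c) => [e|hc0].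
  by rewrite e big_ord1 big_ord1 subnn L00 mulr0 addn1.
rewrite (sum2_one (T := fun a c' => cf M a c' m * cf M (c - a)%N (0 - c')%N 1)
   (a0 := c.-1) (c0 := 0)) //; try lia.
  rewrite sub0n (_ : (c - c.-1)%N = 1%N); last by lia.
  case: (eqVneq c 1%N) => [e|ne].
    rewrite e /= Ltri2 // ?mul0r; by case: m IH hm hmn => [|[|m]].
  rewrite hyp ?eqxx ?mulr1; try lia.
  case: (eqVneq m 1%N) => [e|ne2].
    rewrite e hyp; try lia. by congr (_%:R); apply/eqP/eqP; lia.
  rewrite IH; try lia.
    by congr (_%:R); apply/eqP/eqP; lia.
  move=> c' hc'; apply: hyp; lia.
move=> a c' ha hc' hne; have e : c' = 0%N by lia.
rewrite e sub0n.
case: (posnP a) => [->|ha0]; first by rewrite Ltri2 ?mul0r //; lia.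
case: (eqVneq a c) => [->|ne]; first by rewrite subnn L00 mulr0.
rewrite hyp; last by lia.
by rewrite (_ : (c - a == 1)%N = false) ?mulr0 //; move: hne; rewrite e; lia.
Qed.

Lemma Lphi (h : nat -> K) : h 1%N != 0 ->
  (forall c, (c < n)%N -> \sum_(j < n) cf M c 0 j * h j = h c) ->
  forall c j, (c < n)%N -> (j < n)%N -> cf M c 0 j = (c == j)%:R.
Proof.
move=> h1 hs.
have one : forall c, (c < n)%N -> cf M c 0 1 = (c == 1%N)%:R.
  elim/ltn_ind => c IH hc.
  have : \sum_(j < n) (cf M c 0 j - (c == j)%:R) * h j = 0.
    rewrite (eq_bigr (fun j : 'I_n => cf M c 0 j * h j - (c == j)%:R * h j));
      last by move=> j _; rewrite mulrBl.
    rewrite sumrB hs // (sum_one (T := fun j => (c == j)%:R * h j) hc) ?eqxx ?mul1r ?subrr //.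
    by move=> i _ hi; rewrite eq_sym (negbTE hi) mul0r.
  rewrite (sum_one (T := fun j => (cf M c 0 j - (c == j)%:R) * h j) (i0 := 1)) //; try lia.
    move/eqP; rewrite mulf_eq0 (negbTE h1) orbF subr_eq0 => /eqP.
    by rewrite [(c == 1)%N]eq_sym.
  move=> j hj hj1; case: (posnP j) => [->|hj0].
    by rewrite cf_eps ?eqxx ?andbT ?subrr ?mul0r //; lia.
  rewrite Lsub //; try lia; first by rewrite subrr mul0r.
  by move=> c' hc'; apply: IH; lia.
move=> c j hc hj; case: (posnP j) => [->|hj0].
  by rewrite cf_eps ?andbT ?eqxx //; lia.
case: (eqVneq j 1%N) => [->|ne]; first by rewrite one // eq_sym.
apply: Lsub; try lia; move=> c' hc'; apply: one; lia.
Qed.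


Hypothesis hphi : forall c j, (c < n)%N -> (j < n)%N -> cf M c 0 j = (c == j)%:R.

Lemma Lr1 r : (r < n)%N -> cf M r 1 r = r%:R * cf M 1 1 1.
Proof.
elim: r => [|r IH] hr; first by rewrite cf_eps ?mul0r //; lia.
rewrite -addn1 crec //; try lia.
rewrite (sum_one (T := fun a => \sum_(c < 2) cf M a c r * cf M (r + 1 - a)%N (1 - c)%N 1) (i0 := r)); try lia.
  rewrite /= !big_ord_recr big_ord0 /= add0r.
  have e1 : (r + 1 - r)%N = 1%N by lia.
  rewrite e1 subnn subn0 IH; last by lia.
  rewrite hphi; last (by lia); last by lia.
  rewrite hphi; last (by lia); last by lia.
  rewrite eqxx mul1r mulr1 natrD; ring.
move=> a ha hne; rewrite !big_ord_recr big_ord0 /= add0r subn0 subnn.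
rewrite hphi; last (by lia); last by lia.
have -> : (a == r) = false by apply/negbTE.
rewrite mul0r add0r.
case: (ltnP (r + 1 - a) n) => hra; first last.
  by rewrite (cf_out M (a := (r + 1 - a)%N)) ?mulr0 //; lia.
rewrite hphi //.
have -> : ((r + 1 - a)%N == 1%N) = false by apply/negbTE; lia.
by rewrite mulr0.
Qed.

End Beta0.

End Morph.


Lemma bil_coef M v w k : bil M v w 0 k = \sum_(i < n) \sum_(j < n) v 0 i * w 0 j * M i j 0 k.
Proof.
rewrite /bil summxE; apply: eq_bigr => i _; rewrite summxE; apply: eq_bigr => j _.
by rewrite mxE.
Qed.

Lemma bil_cf M A B (a c b d k : 'I_n) :
  bil M (A a c) (B b d) 0 k = \sum_(i < n) \sum_(j < n) cf A a c i * cf B b d j * cf M i j k.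
Proof.
rewrite bil_coef; apply: eq_bigr => i _; apply: eq_bigr => j _; by rewrite !cfE.
Qed.

Lemma bil_bb M (i j : 'I_n) : bil M (bvec K i) (bvec K j) = M i j.
Proof.
apply/rowP => k; rewrite bil_coef (bigD1 i) // [X in _ + X = _]big1 => [|i' ne]; last first.
  by apply: big1 => j' _; rewrite bvecE val_eqE (negbTE ne) !mul0r.
rewrite (bigD1 j) // [X in _ + X + _ = _]big1 => [|j' ne]; last first.
  by rewrite (bvecE j j') val_eqE (negbTE ne) mulr0 mul0r.
by rewrite !bvecE !eqxx !mul1r !addr0.
Qed.

Lemma sw_bvec (c : 'I_n) F : sw (bvec K c) F =
  \sum_(j < n) \sum_(k < n | (val j + val k == val c)%N) F (bvec K j) (bvec K k).
Proof.
rewrite /sw (bigD1 c) // [X in _ + X = _]big1 => [|i ne]; last first.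
  apply: big1 => j _; apply: big1 => k _; by rewrite bvecE val_eqE (negbTE ne) scale0r.
rewrite addr0; apply: eq_bigr => j _; apply: eq_bigr => k _.
by rewrite bvecE eqxx scale1r.
Qed.

Lemma sw0 (i0 : 'I_n) F : val i0 = 0%N -> sw (bvec K i0) F = F (bvec K i0) (bvec K i0).
Proof.
move=> h; rewrite sw_bvec (bigD1 i0) // [X in _ + X = _]big1 => [|j ne]; last first.
  apply: big1 => k /eqP e; exfalso; move: ne e; rewrite -val_eqE h; move: (val j) (val k) => x y; lia.
rewrite addr0 (big_pred1 i0) // => k /=; by rewrite h -val_eqE h.
Qed.

Lemma ordE (x y : 'I_n) : (x == y) = (nat_of_ord x == nat_of_ord y).
Proof. by []. Qed.

Lemma sw1 (i0 i1 : 'I_n) F : val i0 = 0%N -> val i1 = 1%N ->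
  sw (bvec K i1) F = F (bvec K i0) (bvec K i1) + F (bvec K i1) (bvec K i0).
Proof.
move=> h0 h1; have h0' : nat_of_ord i0 = 0%N := h0; have h1' : nat_of_ord i1 = 1%N := h1.
rewrite sw_bvec (bigD1 i0) // (bigD1 i1) /=; last by rewrite ordE h0' h1'.
rewrite [X in _ + (_ + X) = _]big1 => [|j /andP[n0 n1]]; last first.
  apply: big1 => k /eqP e; exfalso.
  move: n0 n1 e; rewrite !ordE h0' h1'; lia.
rewrite addr0 (big_pred1 i1) /=; last first.
  move=> k /=; rewrite !ordE h0' h1'; lia.
rewrite (big_pred1 i0) // => k /=.
rewrite !ordE h0' h1'; lia.
Qed.

Lemma ceps_b0 (i0 : 'I_n) : val i0 = 0%N -> ceps (bvec K i0) = 1.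
Proof.
move=> h; have h0 : (0 < n)%N by move: (ltn_ord i0); rewrite -[nat_of_ord i0]/(val i0) h.
rewrite (ceps_val _ h0) bvecE.
have -> : (val (Ordinal h0) == val i0) = true by rewrite h.
by [].
Qed.

Lemma sum_inner (T : nat -> nat -> K) j0 : (j0 < n)%N ->
  (forall i j, (i < n)%N -> (j < n)%N -> j != j0 -> T i j = 0) ->
  \sum_(i < n) \sum_(j < n) T i j = \sum_(i < n) T i j0.
Proof.
move=> h H; apply: eq_bigr => i _; apply: (sum_one (T := fun j => T i j)) => // j hj hne.
exact: H.
Qed.

Lemma addcoef (A B : 'rV[K]_n) k : (A + B) 0 k = A 0 k + B 0 k.
Proof. by rewrite mxE. Qed.

Lemma sum_coef (V : 'I_n -> 'I_n -> 'rV[K]_n) (c k : 'I_n) (g : nat -> nat -> K) :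
  (forall j l : 'I_n, V j l 0 k = g j l) ->
  (\sum_(j < n) \sum_(l < n | (val j + val l == val c)%N) V j l) 0 k
    = \sum_(j < (val c).+1) g j (val c - j)%N.
Proof.
move=> H; rewrite -(sum_conv g (ltn_ord c)) summxE; apply: eq_bigr => j _.
rewrite summxE; apply: eq_bigr => l _; exact: H.
Qed.

Lemma LE (P D : 'I_n -> 'I_n -> 'rV[K]_n) : coalg_morph P -> coalg_morph D ->
  (forall m, cf P 0 m 1 = 0) -> (forall m, cf D 0 m 1 = 0) ->
  (forall c j, (c < n)%N -> (j < n)%N -> cf P c 0 j = (c == j)%:R) ->
  (forall c j, (c < n)%N -> (j < n)%N -> cf D c 0 j = (c == j)%:R) ->
  cf P 1 1 1 != 0 -> cf D 1 1 1 = cf P 1 1 1 ->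
  (forall r, (r < n)%N -> cf P 1 1 1 * cf D r 1 1 + \sum_(i < n) cf P r 1 i * cf D i 1 1
      = \sum_(i < n) cf D r 1 i * cf P i 1 1 + cf P 1 1 1 * cf P r 1 1) ->
  forall r k, cf D r 1 k = cf P r 1 k.
Proof.
move=> hP hD bP bD phP phD hk htau heq.
set ka := cf P 1 1 1.
elim/ltn_ind => r IH k.
case: (ltnP r n) => hr; last by rewrite !cf_out // hr.
have A : forall k', (2 <= k')%N -> cf D r 1 k' = cf P r 1 k'.
  move=> k' hk'; case: (ltnP k' n) => hkn; last by rewrite !cf_out // hkn !orbT.
  have e : k' = (k'.-1 + 1)%N by lia.
  rewrite e !crec //; try lia.
  apply: eq_bigr => a _; apply: eq_bigr => c _.
  have ha := ltn_ord a; have hc := ltn_ord c.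
  case: (eqVneq (nat_of_ord c) 0%N) => [ec|nc].
    rewrite ec !subn0 phD; try lia.
    rewrite phP; try lia.
    case: (eqVneq (nat_of_ord a) k'.-1) => [ea|na]; last by rewrite !mul0r.
    by rewrite IH //; lia.
  have ec : nat_of_ord c = 1%N by lia.
  rewrite ec subnn phD; try lia.
  rewrite phP; try lia.
  case: (eqVneq (r - a)%N 1%N) => [e2|n2]; last by rewrite !mulr0.
  by rewrite IH //; lia.
have Z0 : cf D r 1 0 = cf P r 1 0 by rewrite !cf_eps //; lia.
have Z1 : cf D r 1 1 = cf P r 1 1.
  case: (posnP r) => [->|hr0]; first by rewrite bD bP.
  set E := cf D r 1 1 - cf P r 1 1.
  set SPD := \sum_(i < n) cf P r 1 i * cf D i 1 1.
  set SPP := \sum_(i < n) cf P r 1 i * cf P i 1 1.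
  set SDP := \sum_(i < n) cf D r 1 i * cf P i 1 1.
  have e1 : SPD - SPP = cf P r 1 r * E.
    rewrite /SPD /SPP -sumrB.
    rewrite (eq_bigr (fun i : 'I_n => cf P r 1 i * (cf D i 1 1 - cf P i 1 1)));
      last by move=> i _; rewrite mulrBr.
    rewrite (sum_one (T := fun i => cf P r 1 i * (cf D i 1 1 - cf P i 1 1)) hr) //.
    move=> i hi hne; case: (ltnP i r) => h; first by rewrite IH // subrr mulr0.
    by rewrite (Ltri2 hP bP (u := i) (a := r)) ?mul0r //; lia.
  have e2 : SDP - SPP = E * ka.
    rewrite /SDP /SPP -sumrB.
    rewrite (eq_bigr (fun i : 'I_n => (cf D r 1 i - cf P r 1 i) * cf P i 1 1));
      last by move=> i _; rewrite mulrBl.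
    rewrite (sum_one (T := fun i => (cf D r 1 i - cf P r 1 i) * cf P i 1 1) (i0 := 1%N)); [by [] | lia | ].
    move=> i hi hne; case: (posnP i) => [->|h]; first by rewrite Z0 subrr mul0r.
    by rewrite A ?subrr ?mul0r //; lia.
  have h := heq r hr.
  have : cf P r 1 r * E = 0.
    transitivity ((ka * cf D r 1 1 + SPD) - (SDP + ka * cf P r 1 1)); last by rewrite h subrr.
    rewrite -[SPD](subrK SPP) -[SDP](subrK SPP) e1 e2 /E; ring.
  rewrite (Lr1 hP phP hr) -/ka => /eqP; rewrite !mulf_eq0 (negbTE hk) orbF.
  rewrite (negbTE (natr_neq0 (k := r) _)) /=; last by lia.
  by rewrite subr_eq0 => /eqP.
case: k => [//|[//|k]]; by apply: A.
Qed.

End Gen.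

End Aux.
Import Aux.

Theorem proposition4p2 (K : closedFieldType) (hK : [pchar K] =i pred0)
  (n : nat) (hn : (2 <= n)%N) (P D : 'I_n -> 'I_n -> 'rV[K]_n) :
  regular_qcycle P D ->
  (forall i1 : 'I_n, val i1 = 1%N -> P i1 i1 0 i1 <> 0%R) ->
  forall (b c i1 : 'I_n), val i1 = 1%N -> D b i1 0 c = P b i1 0 c.
Proof.
move=> [[hP [hD [L [R [hL [hR [r1 [r2 [r3 r4]]]]]]]]] [c1 [c2 c3]]] hk bb cc i1 hi1.
have h0 : (0 < n)%N by lia.
pose i0 := Ordinal h0.
have hi0 : val i0 = 0%N by [].
have e1 : nat_of_ord i1 = 1%N := hi1.
have e0 : nat_of_ord i0 = 0%N := erefl.
have hka : cf P 1 1 1 != 0.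
  by apply/eqP; rewrite -e1 cfE; exact: hk i1 hi1.
have mu0 : forall M : 'I_n -> 'I_n -> 'rV[K]_n, coalg_morph M -> forall k : nat, k != 1%N -> cf M 1 0 k = 0.
  move=> M hM k ne; case: (posnP k) => [->|hpos]; first by rewrite (cf_eps hn hM) //; lia.
  by rewrite (Ltri hn hM) //; lia.
have c000 : forall M : 'I_n -> 'I_n -> 'rV[K]_n, coalg_morph M -> cf M 0 0 0 = 1.
  by move=> M hM; rewrite (cf_eps hn hM).
have muP : cf P 1 0 1 != 0.
  apply/eqP => hz.
  have := r2 (bvec K i1) (bvec K i0).
  rewrite (sw0 hn) // ceps_b0 // scale1r !bil_bb => /(congr1 (fun v : 'rV[K]_n => v 0 i1)).
  rewrite bil_coef bvecE eqxx big1; first by move/eqP; rewrite eq_sym oner_eq0.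
  move=> i _.
  apply: big1 => j _.
  have -> : P i1 i0 0 i = 0.
    rewrite -cfE e1 e0; case: (eqVneq (nat_of_ord i) 1%N) => [->|ne] //.
    exact: mu0.
  by rewrite !mul0r.
have muD : cf D 1 0 1 != 0.
  apply/eqP => hz.
  have := r3 (bvec K i1) (bvec K i0).
  rewrite (sw0 hn) // ceps_b0 // scale1r !bil_bb => /(congr1 (fun v : 'rV[K]_n => v 0 i1)).
  rewrite bil_coef bvecE eqxx big1; first by move/eqP; rewrite eq_sym oner_eq0.
  move=> i _.
  apply: big1 => j _.
  have -> : D i1 i0 0 i = 0.
    rewrite -cfE e1 e0; case: (eqVneq (nat_of_ord i) 1%N) => [->|ne] //.
    exact: mu0.
  by rewrite !mul0r.
have bP := Lbeta hn hK hP muP.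
have bD := Lbeta hn hK hD muD.
have H1 : forall x, (x < n)%N -> \sum_(j < n) cf D x 0 j * cf P 1 j 1 = cf P 1 x 1.
  move=> x hx; pose X := Ordinal hx.
  have := c1 (bvec K i1) (bvec K i0) (bvec K X).
  rewrite (sw0 hn) // sw_bvec => /(congr1 (fun v : 'rV[K]_n => v 0 i1)).
  rewrite !bil_bb bil_cf e1 e0.
  rewrite (@sum_coef K n _ X i1 (fun j l => \sum_(i < n) \sum_(i' < n) cf P 1 l i * cf P 0 j i' * cf P i i' 1)); last first.
    by move=> j l; rewrite !bil_bb bil_cf e1 e0.
  rewrite /=.
  rewrite (sum_one (T := fun i => \sum_(j < n) cf P 1 0 i * cf D x 0 j * cf P i j 1) (i0 := 1%N)); last first.
  - by move=> i hi ne; apply: big1 => j _; rewrite mu0 // !mul0r.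
  - lia.
  rewrite (sum_one (T := fun j => \sum_(i < n) \sum_(i' < n) cf P 1 (x - j)%N i * cf P 0 j i' * cf P i i' 1) (i0 := 0%N)) //; last first.
    move=> j hj ne; apply: big1 => i _; apply: big1 => i' _.
    by rewrite (F1 hn hP bP) ?(negbTE ne) ?mulr0 ?mul0r //; lia.
  rewrite (sum2_one (T := fun i i' => cf P 1 (x - 0)%N i * cf P 0 0 i' * cf P i i' 1) (a0 := 1%N) (c0 := 0%N)); last first.
  - move=> i i' hi hi' ne; case: (eqVneq i 1%N) => [ei|ni].
      rewrite ei (F1 hn hP bP) //; move: ne; rewrite ei eqxx /= => ne.
      by rewrite (negbTE ne) ?andbF /= mulr0 mul0r.
    by rewrite (F2 hn hP bP) // ?mul0r //; lia.
  - lia.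
  - lia.
  rewrite subn0 (c000 _ hP) mulr1.
  move=> E; apply: (mulfI muP); rewrite mulr_sumr [RHS]mulrC -E.
  by apply: eq_bigr => j _; rewrite mulrA.
have H2 : forall x, (x < n)%N -> \sum_(j < n) cf P x 0 j * cf P 1 j 1 = cf P 1 x 1.
  move=> x hx; pose X := Ordinal hx.
  have := c1 (bvec K i1) (bvec K X) (bvec K i0).
  rewrite (sw0 hn (i0 := i0)) // sw_bvec => /(congr1 (fun v : 'rV[K]_n => v 0 i1)).
  rewrite [in RHS]bil_bb [in RHS]bil_bb bil_cf e1 e0.
  rewrite (@sum_coef K n _ X i1 (fun j l => \sum_(i < n) \sum_(i' < n) cf P 1 j i * cf D 0 l i' * cf P i i' 1)); last first.
    by move=> j l; rewrite !bil_bb bil_cf e1 e0.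
  rewrite /=.
  rewrite (sum_one (T := fun i => \sum_(j < n) cf P 1 0 i * cf P x 0 j * cf P i j 1) (i0 := 1%N)); last first.
  - by move=> i hi ne; apply: big1 => j _; rewrite mu0 // !mul0r.
  - lia.
  rewrite (sum_one (T := fun j => \sum_(i < n) \sum_(i' < n) cf P 1 j i * cf D 0 (x - j)%N i' * cf P i i' 1) (i0 := x)) //; last first.
    move=> j hj ne; apply: big1 => i _; apply: big1 => i' _.
    rewrite (F1 hn hD bD) ?mulr0 ?mul0r //; try lia.
    have -> : ((x - j)%N == 0%N) = false by apply/negbTE; lia.
    by rewrite /= mulr0 mul0r.
  rewrite (sum2_one (T := fun i i' => cf P 1 x i * cf D 0 (x - x)%N i' * cf P i i' 1) (a0 := 1%N) (c0 := 0%N)); last first.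
  - move=> i i' hi hi' ne; case: (eqVneq i 1%N) => [ei|ni].
      rewrite ei subnn (F1 hn hD bD) //; move: ne; rewrite ei eqxx /= => ne.
      by rewrite (negbTE ne) ?andbF /= mulr0 mul0r.
    by rewrite (F2 hn hP bP) // ?mul0r //; lia.
  - lia.
  - lia.
  rewrite subnn (c000 _ hD) mulr1.
  move=> E; apply: (mulfI muP); rewrite mulr_sumr [RHS]mulrC E.
  by apply: eq_bigr => j _; rewrite mulrA.
have phD := Lphi hn hD bD (h := fun j => cf P 1 j 1) hka H1.
have phP := Lphi hn hP bP (h := fun j => cf P 1 j 1) hka H2.
have DP10 : D i1 i0 = P i1 i0.
  by apply/rowP => k; rewrite -!cfE phD ?phP.
have htau : cf D 1 1 1 = cf P 1 1 1.
  have := c1 (bvec K i1) (bvec K i1) (bvec K i1).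
  rewrite !(sw1 hn (i0 := i0) (i1 := i1)) // !bil_bb DP10 addrC => /addrI.
  move/(congr1 (fun v : 'rV[K]_n => v 0 i1)); rewrite !bil_cf e1 e0.
  rewrite (sum2_one (T := fun i j => cf P 1 0 i * cf D 1 1 j * cf P i j 1) (a0 := 1%N) (c0 := 1%N)); last first.
  - move=> i j hi hj ne; case: (eqVneq i 1%N) => [ei|ni].
      have nj : j != 1%N by move: ne; rewrite ei eqxx.
      by rewrite ei (@F2 K n hn _ hD bD 1%N j ltac:(lia) nj) ?mulr0 ?mul0r.
    by rewrite phP // (_ : (1 == i)%N = false) ?mul0r //; lia.
  - lia.
  - lia.
  rewrite (sum2_one (T := fun i j => cf P 1 0 i * cf P 1 1 j * cf P i j 1) (a0 := 1%N) (c0 := 1%N)); last first.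
  - move=> i j hi hj ne; case: (eqVneq i 1%N) => [ei|ni].
      have nj : j != 1%N by move: ne; rewrite ei eqxx.
      by rewrite ei (@F2 K n hn _ hP bP 1%N j ltac:(lia) nj) ?mulr0 ?mul0r.
    by rewrite phP // (_ : (1 == i)%N = false) ?mul0r //; lia.
  - lia.
  - lia.
  by move/(mulIf hka); rewrite phP // eqxx !mul1r.
have Heq : forall r, (r < n)%N -> cf P 1 1 1 * cf D r 1 1 + \sum_(i < n) cf P r 1 i * cf D i 1 1
      = \sum_(i < n) cf D r 1 i * cf P i 1 1 + cf P 1 1 1 * cf P r 1 1.
  move=> r hr; pose Rr := Ordinal hr.
  have := c2 (bvec K Rr) (bvec K i1) (bvec K i1).
  rewrite !(sw1 hn (i0 := i0) (i1 := i1)) // !bil_bb.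
  move/(congr1 (fun v : 'rV[K]_n => v 0 i1)); rewrite !addcoef !bil_cf e1 e0 /=.
  rewrite (sum2_one (T := fun i j => cf P r 0 i * cf P 1 1 j * cf D i j 1) (a0 := r) (c0 := 1%N)); last first.
  - move=> i j hi hj ne; case: (eqVneq i r) => [ei|ni].
      have nj : j != 1%N by move: ne; rewrite ei eqxx.
      by rewrite ei (@F2 K n hn _ hP bP 1%N j ltac:(lia) nj) ?mulr0 ?mul0r.
    by rewrite phP // (_ : (r == i)%N = false) ?mul0r //; lia.
  - lia.
  - lia.
  rewrite (sum2_one (T := fun i j => cf D r 0 i * cf D 1 1 j * cf P i j 1) (a0 := r) (c0 := 1%N)); last first.
  - move=> i j hi hj ne; case: (eqVneq i r) => [ei|ni].
      have nj : j != 1%N by move: ne; rewrite ei eqxx.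
      by rewrite ei (@F2 K n hn _ hD bD 1%N j ltac:(lia) nj) ?mulr0 ?mul0r.
    by rewrite phD // (_ : (r == i)%N = false) ?mul0r //; lia.
  - lia.
  - lia.
  rewrite (sum_inner (T := fun i j => cf P r 1 i * cf P 1 0 j * cf D i j 1) (j0 := 1%N)); last first.
  - move=> i j hi hj ne; by rewrite phP // (_ : (1 == j)%N = false) ?mulr0 ?mul0r //; lia.
  - lia.
  rewrite (sum_inner (T := fun i j => cf D r 1 i * cf D 1 0 j * cf P i j 1) (j0 := 1%N)); last first.
  - move=> i j hi hj ne; by rewrite phD // (_ : (1 == j)%N = false) ?mulr0 ?mul0r //; lia.
  - lia.
  rewrite phP // phD // phP // phD // !eqxx /= !mulr1n !mul1r htau.
  have s1 : \sum_(i < n) cf P r 1 i * 1 * cf D i 1 1 = \sum_(i < n) cf P r 1 i * cf D i 1 1.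
    by apply: eq_bigr => i _; rewrite mulr1.
  have s2 : \sum_(i < n) cf D r 1 i * 1 * cf P i 1 1 = \sum_(i < n) cf D r 1 i * cf P i 1 1.
    by apply: eq_bigr => i _; rewrite mulr1.
  by rewrite s1 s2.
have := LE hn hK hP hD bP bD phP phD hka htau Heq.
by move=> H; rewrite -!cfE e1 H.
Qed.
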